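(* In the setting below, the quasi-cyclic code $C$ is Hermitian LCD if and only if all of the following hold: (I) $g(x)$ is self-conjugate-reciprocal; (II) $l(x)$ is self-conjugate-reciprocal; (III) $\gcd(t_{22}(x),g_{12}(x))=1$; (IV) $\gcd\big(r_{22}(x),\ g_{11}(x)\hat g_{11}(x)+g_{12}(x)\hat g_{12}(x)\big)=1$.
   Context: Let $q$ be a prime power, $F=\mathbb{F}_{q^2}$, $m\ge1$ with $\gcd(q,m)=1$, and $R=F[x]/\langle x^m-1\rangle$; elements of $R$ are represented by polynomials of degree $<m$ and identified with their coefficient vectors in $F^m$. A quasi-cyclic code of length $2m$ and index $2$ is an $R$-submodule $C\subseteq R^2$. The Hermitian inner product of $(a_1,a_2),(b_1,b_2)\in R^2$ is $\sum_k a_{1,k}b_{1,k}^q+\sum_k a_{2,k}b_{2,k}^q$, where $a_{i,k},b_{i,k}$ are the coefficients of $x^k$; $C^{\perp_h}$ is the dual with respect to it, and $C$ is Hermitian LCD if $C\cap C^{\perp_h}=\{0\}$. For $f=\sum_{k=0}^{d} f_kx^k\in F[x]$ of degree $d$, its conjugate is $f^{[q]}=\sum f_k^qx^k$, its conjugate-reciprocal is $f^{\dagger}(x)=x^{d}f^{[q]}(x^{-1})$, and $f$ is self-conjugate-reciprocal if $f^\dagger=\alpha f$ for some $\alpha\in F$. For $f$ of degree at most $m$, its conjugate transpose is $\hat f(x)=x^m f^{[q]}(x^{-1})$. Suppose $C$ is generated as an $R$-module by $(g_{11}(x),g_{12}(x))$ and $(0,g_{22}(x))$, where $g_{11},g_{12},g_{22}\in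 F[x]$ satisfy: $g_{11}\mid x^m-1$, $g_{22}\mid x^m-1$, $\deg g_{12}<\deg g_{22}$, and $g_{11}g_{22}\mid (x^m-1)g_{12}$. Define $g=\gcd(g_{11},g_{22})$, $l=(x^m-1)/\mathrm{lcm}(g_{11},g_{22})$, $g_{11}=g\,g_{11}'$, $g_{22}=g\,g_{22}'$, $r_{22}=\gcd(g_{22}',g_{22}'^{\dagger})$, $t_{22}=g_{22}'/r_{22}$. *)

(* Defs.v *)
From HB Require Import structures.
From mathcomp Require Import all_boot all_order all_algebra all_field.
Set Implicit Arguments. Unset Strict Implicit. Unset Printing Implicit Defensive.
Import GRing.Theory.
Local Open Scope ring_scope.

Section QC.
Variable F : finFieldType.
Variable q : nat.

Definition xm1 (m : nat) : {poly F} := 'X^m - 1.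

Definition conj_poly (f : {poly F}) : {poly F} := map_poly (fun c => c ^+ q) f.

(* conjugate-reciprocal f^dagger(x) = x^(deg f) f^[q](x^{-1}) *)
Definition conj_recip (f : {poly F}) : {poly F} :=
  \poly_(i < size f) ((f`_((size f).-1 - i)) ^+ q).

Definition scr (f : {poly F}) : Prop := exists alpha : F, conj_recip f = alpha *: f.

(* conjugate transpose hat f(x) = x^m f^[q](x^{-1}), for deg f <= m *)
Definition conj_transp (m : nat) (f : {poly F}) : {poly F} :=
  \poly_(i < m.+1) ((f`_(m - i)) ^+ q).

Definition lcm_poly (a b : {poly F}) : {poly F} := (a * b) %/ gcdp a b.

(* the quasi-cyclic code generated by (g11,g12) and (0,g22) in R^2,
   R = F[x]/<x^m-1>, elements represented by polynomials of degree < m *)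
Definition qc_code (m : nat) (g11 g12 g22 : {poly F}) (c : {poly F} * {poly F}) : Prop :=
  exists a b : {poly F},
    c = ((a * g11) %% xm1 m, (a * g12 + b * g22) %% xm1 m).

Definition herm (m : nat) (u v : {poly F} * {poly F}) : F :=
  \sum_(k < m) (u.1`_k * (v.1`_k) ^+ q + u.2`_k * (v.2`_k) ^+ q).

Definition herm_LCD (m : nat) (C : {poly F} * {poly F} -> Prop) : Prop :=
  forall c, C c -> (forall d, C d -> herm m c d = 0) -> c = (0, 0).

End QC.

(* Main.v *)
Require Import Defs.
From HB Require Import structures.
From mathcomp Require Import all_boot all_order all_algebra all_field.
From mathcomp Require Import ring zify.
From Stdlib Require Classical_Prop Classical_Pred_Type.
Import GRing.Theory.
Local Open Scope ring_scope.

Section S.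
Variable F : finFieldType.
Variables q m : nat.
Hypothesis conjD : forall a b : F, (a + b) ^+ q = a ^+ q + b ^+ q.
Hypothesis q_gt0 : (0 < q)%N.
Hypothesis conjK : forall a : F, (a ^+ q) ^+ q = a.
Hypothesis m_gt0 : (0 < m)%N.
Hypothesis m_neq0 : (m%:R : F) != 0.

Definition cf (a : F) := a ^+ q.
Fact cf_nmod : nmod_morphism cf.
Proof. split; first by rewrite /cf expr0n; case: q q_gt0. by move=> a b; apply: conjD. Qed.
HB.instance Definition _ := GRing.isNmodMorphism.Build F F cf cf_nmod.
Fact cf_mon : monoid_morphism cf.
Proof. by split; rewrite /cf ?expr1n // => a b; rewrite exprMn. Qed.
HB.instance Definition _ := GRing.isMonoidMorphism.Build F F cf cf_mon.

Lemma cfK a : cf (cf a) = a. Proof. exact: conjK. Qed.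
Lemma cf_eq0 a : (cf a == 0) = (a == 0).
Proof.
apply/eqP/eqP => [h|->]; last exact: rmorph0.
by rewrite -[a]cfK h rmorph0.
Qed.

Local Notation X := (xm1 F m).
Local Notation Y := ('X^(m.-1) : {poly F}).

Lemma X_def : X = 'X^m - 1. Proof. by []. Qed.
Lemma size_X : size X = m.+1. Proof. by rewrite X_def size_XnsubC. Qed.
Lemma X_neq0 : X != 0. Proof. by rewrite -size_poly_eq0 size_X. Qed.

Definition eqm (u v : {poly F}) := X %| u - v.

Lemma eqm_refl u : eqm u u. Proof. by rewrite /eqm subrr dvdp0. Qed.
Lemma eqm_eq u v : u = v -> eqm u v. Proof. by move=> ->; apply: eqm_refl. Qed.
Lemma eqm_sym u v : eqm u v -> eqm v u.
Proof. by rewrite /eqm -opprB dvdpNr. Qed.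
Lemma eqm_trans u v w : eqm u v -> eqm v w -> eqm u w.
Proof.
rewrite /eqm => h1 h2; have -> : u - w = (u - v) + (v - w) by ring.
exact: dvdp_add.
Qed.
Lemma eqmD u u' v v' : eqm u u' -> eqm v v' -> eqm (u + v) (u' + v').
Proof.
rewrite /eqm => h1 h2; have -> : u + v - (u' + v') = (u - u') + (v - v') by ring.
exact: dvdp_add.
Qed.
Lemma eqmN u u' : eqm u u' -> eqm (- u) (- u').
Proof. by rewrite /eqm -opprD dvdpNr. Qed.
Lemma eqmM u u' v v' : eqm u u' -> eqm v v' -> eqm (u * v) (u' * v').
Proof.
rewrite /eqm => h1 h2; have -> : u * v - u' * v' = (u - u') * v + u' * (v - v') by ring.
by apply: dvdp_add; [apply: dvdp_mulr | apply: dvdp_mull].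
Qed.
Lemma eqm_mod u : eqm (u %% X) u.
Proof.
rewrite /eqm {2}(divp_eq u X).
have -> : u %% X - (u %/ X * X + u %% X) = - (u %/ X) * X by ring.
exact: dvdp_mull.
Qed.
Lemma eqm0 u : eqm u 0 = (X %| u). Proof. by rewrite /eqm subr0. Qed.
Lemma eqm_dvd p u v : p %| X -> eqm u v -> (p %| u) = (p %| v).
Proof.
move=> pX h; have h' : p %| u - v by apply: dvdp_trans h.
apply/idP/idP => h2.
  by have := dvdp_sub h2 h'; rewrite opprB addrC subrK.
by have := dvdp_add h' h2; rewrite subrK.
Qed.

Lemma dvd_Xpow a b : (a = b %[mod m])%N -> X %| 'X^a - 'X^b.
Proof.
wlog le_ba : a b / (b <= a)%N.
  move=> W h; case: (leqP b a) => hab; first exact: W.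
  by rewrite -opprB dvdpNr; apply: W (ltnW hab) _.
move=> h; have [k ->] : exists k, a = (b + k * m)%N.
  exists ((a - b) %/ m)%N; rewrite divnK ?subnKC //.
  by rewrite -eqn_mod_dvd // h.
rewrite exprD -{2}(mulr1 'X^b) -mulrBr; apply: dvdp_mull.
by rewrite mulnC exprM subrX1 X_def; apply: dvdp_mulr.
Qed.

Lemma dvd_sum_pow n (c : nat -> F) (a b : nat -> nat) :
  (forall j, (j < n)%N -> (a j = b j %[mod m])%N) ->
  X %| \sum_(j < n) c j *: ('X^(a j) - 'X^(b j)).
Proof.
move=> h; apply: (big_ind (fun p => X %| p)) => [|x y|j _]; first exact: dvdp0.
  exact: dvdp_add.
by rewrite -mul_polyC; apply: dvdp_mull; apply: dvd_Xpow; apply: h.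
Qed.

Lemma eqm_sum_pow n (c : nat -> F) (a b : nat -> nat) :
  (forall j, (j < n)%N -> (a j = b j %[mod m])%N) ->
  eqm (\sum_(j < n) c j *: 'X^(a j)) (\sum_(j < n) c j *: 'X^(b j)).
Proof.
move=> h; rewrite /eqm -sumrB.
under eq_bigr do rewrite -scalerBr.
exact: dvd_sum_pow.
Qed.

Lemma poly_sumn n (u : {poly F}) : (size u <= n)%N ->
  u = \sum_(j < n) u`_j *: 'X^j.
Proof.
move=> hu; rewrite -poly_def; apply/polyP => i; rewrite coef_poly.
by case: ltnP => // h; rewrite nth_default // (leq_trans hu h).
Qed.

Lemma comp_Xpow n e (u : {poly F}) : (size u <= n)%N ->
  u \Po 'X^e = \sum_(j < n) u`_j *: 'X^(e * j).
Proof.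
move=> hu; rewrite {1}(poly_sumn _ _ hu) rmorph_sum /=.
apply: eq_bigr => j _; rewrite comp_polyZ rmorphXn /= comp_polyX.
by rewrite exprM.
Qed.

Definition sig (u : {poly F}) : {poly F} := map_poly cf u \Po Y.

Lemma sigD u v : sig (u + v) = sig u + sig v.
Proof. by rewrite /sig rmorphD comp_polyD. Qed.
Lemma sigB u v : sig (u - v) = sig u - sig v.
Proof. by rewrite /sig rmorphB comp_polyB. Qed.
Lemma sigM u v : sig (u * v) = sig u * sig v.
Proof. by rewrite /sig rmorphM comp_polyM. Qed.
Lemma sig1 : sig 1 = 1.
Proof. by rewrite /sig rmorph1 comp_polyC. Qed.
Lemma sig0 : sig 0 = 0.
Proof. by rewrite /sig rmorph0 comp_polyC. Qed.
Lemma sigN u : sig (- u) = - sig u.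
Proof. by rewrite -sub0r sigB sig0 sub0r. Qed.
Lemma sigZ c u : sig (c *: u) = cf c *: sig u.
Proof. by rewrite /sig map_polyZ comp_polyZ. Qed.



Lemma sig_expand n (u : {poly F}) : (size u <= n)%N ->
  sig u = \sum_(j < n) cf u`_j *: 'X^(m.-1 * j).
Proof.
move=> hu; rewrite /sig (comp_Xpow n).
  by apply: eq_bigr => j _; rewrite coef_map.
by rewrite size_map_poly.
Qed.

Lemma sigX : X %| sig X.
Proof.
have -> : sig X = 'X^(m.-1 * m) - 'X^0.
  rewrite /sig X_def rmorphB rmorph1 /= map_polyXn comp_polyB comp_polyC.
  by rewrite rmorphXn /= comp_polyX -exprM expr0.
by apply: dvd_Xpow; rewrite modnMl mod0n.
Qed.

Lemma sig_mod u v : eqm u v -> eqm (sig u) (sig v).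
Proof.
rewrite /eqm -sigB => /dvdpP [k ->]; rewrite sigM.
exact: dvdp_mull sigX.
Qed.

Lemma eqm_comp_pow e (u : {poly F}) : (e = 1 %[mod m])%N -> eqm (u \Po 'X^e) u.
Proof.
move=> he; rewrite (comp_Xpow (size u)) //.
rewrite [X in eqm _ X](poly_sumn _ _ (leqnn (size u))).
under [X in eqm _ X]eq_bigr do rewrite -[j in 'X^j]mul1n.
apply: eqm_sum_pow => j _; by rewrite -modnMml he modnMml.
Qed.

Lemma sigK u : eqm (sig (sig u)) u.
Proof.
rewrite /sig map_comp_poly map_polyXn -map_poly_comp.
rewrite (@eq_map_poly _ _ _ idfun); last by move=> a /=; apply: cfK.
rewrite map_poly_id // -comp_polyA.
have -> : ('X^(m.-1) \Po 'X^(m.-1) : {poly F}) = 'X^(m.-1 * m.-1).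
  by rewrite rmorphXn /= comp_polyX -exprM.
apply: eqm_comp_pow; have [n hn] : exists n, m = n.+1 by exists m.-1; rewrite prednK.
rewrite hn /=.
have h : (n * n + n == 1 + n %[mod n.+1])%N.
  by rewrite addnC -mulnS modnMl add1n modnn.
by rewrite eqn_modDr in h; apply/eqP.
Qed.

Definition tr (u : {poly F}) : F := (u %% X)`_0.

Lemma tr_eqm u v : eqm u v -> tr u = tr v.
Proof.
rewrite /eqm /tr => /modp_eq0 h.
have -> : u %% X = v %% X by apply/eqP; rewrite -subr_eq0 -modpN -modpD h.
by [].
Qed.
Lemma trD u v : tr (u + v) = tr u + tr v.
Proof. by rewrite /tr modpD coefD. Qed.
Lemma trZ c u : tr (c *: u) = c * tr u.
Proof. by rewrite /tr modpZl coefZ. Qed.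
Lemma tr0 : tr 0 = 0.
Proof. by rewrite /tr mod0p coef0. Qed.
Lemma tr_sum n (f : 'I_n -> {poly F}) : tr (\sum_(i < n) f i) = \sum_(i < n) tr (f i).
Proof. exact: (big_morph tr trD tr0). Qed.

Lemma tr_Xn e : tr 'X^e = ((e %% m)%N == 0%N)%:R.
Proof.
rewrite (@tr_eqm _ 'X^(e %% m)); last by apply: dvd_Xpow; rewrite modn_mod.
rewrite /tr modp_small ?coefXn ?size_X ?size_polyXn ?ltnS ?ltn_pmod //.
by rewrite eq_sym.
Qed.

Lemma sigXn j : sig 'X^j = 'X^(m.-1 * j).
Proof. by rewrite /sig map_polyXn rmorphXn /= comp_polyX exprM. Qed.

Lemma modm_eq i j : (i < m)%N -> (j < m)%N ->
  (((i + m.-1 * j) %% m)%N == 0%N) = (i == j).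
Proof.
have [n hn] : exists n, m = n.+1 by exists m.-1; rewrite prednK.
rewrite hn /= => hi hj.
have -> : ((i + n * j) %% n.+1 == 0)%N = (i + n * j == 0 %[mod n.+1])%N by rewrite mod0n.
rewrite -(eqn_modDr j) add0n -addnA -mulSnr addnC mulnC modnMDl.
by rewrite !modn_small.
Qed.

Lemma tr_basis (u : {poly F}) j : (size u <= m)%N -> (j < m)%N -> tr (u * sig 'X^j) = u`_j.
Proof.
move=> hu hj; rewrite {1}(poly_sumn _ _ hu) sigXn mulr_suml tr_sum.
under eq_bigr do rewrite -scalerAl -exprD trZ tr_Xn modm_eq //.
rewrite (bigD1 (Ordinal hj)) //= eqxx mulr1 big1 ?addr0 // => i hi.
have -> : (i == j :> nat) = false.
  by apply/negbTE; apply: contra hi => /eqP h; apply/eqP/val_inj.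
by rewrite mulr0.
Qed.

Lemma herm_tr (u v : {poly F}) : (size u <= m)%N -> (size v <= m)%N ->
  \sum_(k < m) u`_k * (v`_k) ^+ q = tr (u * sig v).
Proof.
move=> hu hv; rewrite (sig_expand _ _ hv) mulr_sumr tr_sum.
apply: eq_bigr => k _; rewrite -scalerAr trZ -sigXn tr_basis //.
by rewrite mulrC.
Qed.

Lemma size_modX (u : {poly F}) : (size (u %% X)%R <= m)%N.
Proof. by rewrite -ltnS -size_X ltn_modp X_neq0. Qed.

Lemma poly_eq0_coefs (u : {poly F}) : (size u <= m)%N ->
  (forall k, (k < m)%N -> u`_k = 0) -> u = 0.
Proof.
move=> hu h; rewrite (poly_sumn _ _ hu) big1 // => k _; by rewrite h // scale0r.
Qed.

Variables g11 g12 g22 : {poly F}.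

Definition H1 a b := a * g11 * sig g11 + (a * g12 + b * g22) * sig g12.
Definition H2 a b := (a * g12 + b * g22) * sig g22.
Definition cw a b : {poly F} * {poly F} := ((a * g11) %% X, (a * g12 + b * g22) %% X).

Lemma herm_code a b a' b' :
  herm q m (cw a b) (cw a' b') = tr (sig a' * H1 a b + sig b' * H2 a b).
Proof.
rewrite /herm big_split /= !herm_tr ?size_modX // -trD.
apply: tr_eqm; rewrite /H1 /H2.
apply: eqm_trans (_ : eqm _ (a * g11 * (sig a' * sig g11) +
   (a * g12 + b * g22) * (sig a' * sig g12 + sig b' * sig g22))) _.
  apply: eqmD; apply: eqmM; rewrite ?eqm_mod //.
    by rewrite -sigM; apply: sig_mod; apply: eqm_mod.
  by rewrite -!sigM -sigD; apply: sig_mod; apply: eqm_mod.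
by apply: eqm_eq; ring.
Qed.

Lemma LCD_iff : herm_LCD q m (qc_code m g11 g12 g22) <->
  (forall a b, X %| H1 a b -> X %| H2 a b -> X %| a * g11 /\ X %| a * g12 + b * g22).
Proof.
split.
  move=> hL a b h1 h2.
  have hc : cw a b = (0, 0).
    apply: hL; first by exists a, b.
    move=> d [a' [b' ->]]; rewrite -/(cw a' b') herm_code -tr0; apply: tr_eqm.
    apply: eqm_trans (_ : eqm _ (sig a' * 0 + sig b' * 0)) _.
      by apply: eqmD; apply: eqmM; rewrite ?eqm0 //; exact: eqm_refl.
    by rewrite !mulr0 addr0; apply: eqm_refl.
  by case: hc => /modp_eq0P h3 /modp_eq0P h4.
move=> h c [a [b ->]] hd.
have [] := h a b.
- rewrite -eqm0; apply: (eqm_trans _ (H1 a b %% X)); first exact: eqm_sym (eqm_mod _).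
  rewrite eqm0.
  apply/modp_eq0P; apply: poly_eq0_coefs; first exact: size_modX.
  move=> k hk; rewrite -tr_basis ?size_modX //.
  rewrite (@tr_eqm _ (sig 'X^k * H1 a b + sig 0 * H2 a b)).
    by rewrite -herm_code hd //; exists 'X^k, 0.
  rewrite sig0 mul0r addr0 mulrC; apply: eqmM; first exact: eqm_refl.
  by apply: (eqm_trans _ (H1 a b %% X)); exact: eqm_mod.
- rewrite -eqm0; apply: (eqm_trans _ (H2 a b %% X)); first exact: eqm_sym (eqm_mod _).
  rewrite eqm0.
  apply/modp_eq0P; apply: poly_eq0_coefs; first exact: size_modX.
  move=> k hk; rewrite -tr_basis ?size_modX //.
  rewrite (@tr_eqm _ (sig 0 * H1 a b + sig 'X^k * H2 a b)).
    by rewrite -herm_code hd //; exists 0, 'X^k.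
  rewrite sig0 mul0r add0r mulrC; apply: eqmM; first exact: eqm_refl.
  by apply: (eqm_trans _ (H2 a b %% X)); exact: eqm_mod.
by move=> /modp_eq0P -> /modp_eq0P ->.
Qed.
Definition pr (p : {poly F}) := [/\ p %| X, (1 < size p)%N &
  forall u v, p %| u * v -> p %| u \/ p %| v].

Lemma irr_prime (p : {poly F}) : irreducible_poly p ->
  forall u v, p %| u * v -> p %| u \/ p %| v.
Proof.
move=> ip u v huv; case: (boolP (p %| u)) => hu; [by left|right].
have cop : coprimep p u.
  rewrite /coprimep; apply/negPn/negP => hs.
  have e := ip.2 _ hs (dvdp_gcdl p u).
  by move: hu; rewrite -(eqp_dvdl _ e) dvdp_gcdr.
by rewrite -(Gauss_dvdpr _ cop).
Qed.

Lemma exists_irr n (u : {poly F}) : (size u <= n)%N -> (1 < size u)%N ->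
  exists p, irreducible_poly p /\ p %| u.
Proof.
elim: n u => [|n IH] u hn hu; first by move: hu; rewrite leqNgt (leq_ltn_trans hn).
case: (Classical_Prop.classic (irreducible_poly u)) => ir.
  by exists u; split=> //; apply: dvdpp.
have [r hr] : exists r : {poly F}, ~ (size r != 1%N -> r %| u -> r %= u).
  apply: Classical_Pred_Type.not_all_ex_not => h; apply: ir; split => //.
have hr1 : size r != 1%N by apply/negP => h; apply: hr => h'; rewrite h in h'.
have hr2 : r %| u by apply/negP => h; apply: hr => _ h'; rewrite h' in h.
have hr3 : ~~ (r %= u) by apply/negP => h; apply: hr.
have u0 : u != 0 by rewrite -size_poly_eq0; case: (size u) hu.
have r0 : r != 0 by apply: contraNneq u0 => r0; move: hr2; rewrite r0 dvd0p.
have hs : (size r < size u)%N.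
  rewrite ltn_neqAle dvdp_leq // andbT; apply: contra hr3 => /eqP e.
  by rewrite -(dvdp_size_eqp hr2) e.
have hr4 : (1 < size r)%N.
  by rewrite ltn_neqAle eq_sym hr1 lt0n size_poly_eq0.
have [p [ip hp]] := IH r (leq_trans hs (ltnSE hn)) hr4.
by exists p; split => //; apply: dvdp_trans hp hr2.
Qed.
Lemma prX p : pr p -> p %| X. Proof. by case. Qed.
Lemma prS p : pr p -> (1 < size p)%N. Proof. by case. Qed.
Lemma prP p : pr p -> forall u v, p %| u * v -> p %| u \/ p %| v. Proof. by case. Qed.

Lemma pr_not1 p : pr p -> ~~ (p %| 1).
Proof. by case=> _ hs _; rewrite dvdp1 neq_ltn hs orbT. Qed.

Lemma pr_notX p j : pr p -> ~~ (p %| 'X^j).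
Proof.
move=> hp; elim: j => [|j IH]; first by rewrite expr0 pr_not1.
apply/negP; rewrite exprS => /(prP _ hp) [hX|]; last by apply/negP.
have : p %| 'X^m by rewrite -(prednK m_gt0) exprS; apply: dvdp_mulr.
move=> h; have := dvdp_sub h (prX _ hp); rewrite X_def opprB addrC subrK.
by apply/negP; apply: pr_not1.
Qed.

Lemma sqfree p : pr p -> ~~ (p * p %| X).
Proof.
move=> hp; apply/negP => /dvdpP [k hk].
have hd : p %| X^`().
  rewrite hk derivM derivM; apply: dvdp_add; first by apply: dvdp_mull; apply: dvdp_mulr.
  by apply: dvdp_mull; apply: dvdp_add; [apply: dvdp_mull|apply: dvdp_mulr]; apply: dvdpp.
move: hd; rewrite X_def derivB derivXn derivC subr0 -scaler_nat dvdpZr //.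
by apply/negP; apply: pr_notX.
Qed.

Lemma sq_contra p u v : pr p -> u * v %| X -> p %| u -> p %| v -> False.
Proof.
move=> hp huv hu hv; have := sqfree _ hp; rewrite (dvdp_trans (dvdp_mul hu hv) huv).
by [].
Qed.

Lemma dvdX_all u : (forall p, pr p -> p %| u) -> X %| u.
Proof.
move=> h; set G := gcdp X u; set d := X %/ G.
have hX : X = d * G by rewrite /d divpK // dvdp_gcdl.
have d0 : d != 0 by apply: contraNneq X_neq0 => e; rewrite hX e mul0r.
have G0 : G != 0 by apply: contraNneq X_neq0 => e; rewrite hX e mulr0.
case: (leqP (size d) 1) => hd.
  have sd : size d = 1%N by apply/eqP; rewrite eqn_leq hd lt0n size_poly_eq0.
  have e : G %= X by rewrite -dvdp_size_eqp ?dvdp_gcdl // hX size_mul // sd.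
  by rewrite -(eqp_dvdl _ e) dvdp_gcdr.
have [p [ip hpd]] := exists_irr _ _ (leqnn _) hd.
have hpX : p %| X by rewrite hX; apply: dvdp_mulr.
have hpr : pr p by split => //; [case: ip | apply: irr_prime].
have hpG : p %| G by rewrite dvdp_gcd hpX h.
by case: (sq_contra _ _ _ hpr (eq_ind _ (fun z => z %| X) (dvdpp X) _ hX) hpd hpG).
Qed.

Lemma dvd_loc d e : d %| X -> (forall p, pr p -> p %| d -> p %| e) -> d %| e.
Proof.
move=> hd h; set c := X %/ d.
have hX : X = c * d by rewrite /c divpK.
have c0 : c != 0 by apply: contraNneq X_neq0 => e0; rewrite hX e0 mul0r.
have : X %| c * e.
  apply: dvdX_all => p hp; case: (boolP (p %| d)) => hpd.
    by apply: dvdp_mull; apply: h.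
  have := (prX _ hp); rewrite hX => /(prP _ hp) [hc|]; last by rewrite (negPf hpd).
  by apply: dvdp_mulr.
by rewrite hX dvdp_mul2l.
Qed.

Lemma cop_loc d w : d %| X ->
  coprimep d w <-> (forall p, pr p -> p %| d -> ~~ (p %| w)).
Proof.
move=> hd; split.
  move=> /coprimepP h p hp hpd; apply/negP => hpw.
  have := eqp_size (h p hpd hpw); rewrite size_poly1 => e.
  by case: hp => _; rewrite e.
move=> h; case: (boolP (coprimep d w)) => // nc; exfalso.
have nc' : size (gcdp d w) != 1%N := nc.
have d0 : d != 0 by apply: contraTneq hd => ->; rewrite dvd0p; exact: X_neq0.
have G0 : gcdp d w != 0 by rewrite gcdp_eq0 negb_and d0.
have hs : (1 < size (gcdp d w))%N.
  by rewrite ltn_neqAle eq_sym nc' lt0n size_poly_eq0.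
have [p [ip hp]] := exists_irr _ _ (leqnn _) hs.
have hpd : p %| d by apply: dvdp_trans hp (dvdp_gcdl _ _).
have hpr : pr p by split => //; [apply: dvdp_trans hpd hd | case: ip | apply: irr_prime].
by move: (h p hpr hpd); rewrite (dvdp_trans hp (dvdp_gcdr _ _)).
Qed.

Lemma dvd_quo p u v : pr p -> v %| u -> u %| X ->
  (p %| u %/ v) = (p %| u) && ~~ (p %| v).
Proof.
move=> hp hvu huX; have hu : u = u %/ v * v by rewrite divpK.
apply/idP/andP.
  move=> h; split; first exact: dvdp_trans h (divp_dvd hvu).
  apply/negP => hv; apply: (sq_contra _ _ _ hp _ h hv); by rewrite -hu.
case=> h1 h2; move: h1; rewrite {1}hu => /(prP _ hp) [] //.
by rewrite (negPf h2).
Qed.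
Lemma cr_sig (u : {poly F}) : eqm ('X^((size u).-1) * sig u) (conj_recip q u).
Proof.
rewrite /conj_recip poly_def (sig_expand _ _ (leqnn _)) mulr_sumr.
rewrite [X in eqm _ X](reindex_inj rev_ord_inj) /=.
have e : forall i : 'I_(size u), ((size u).-1 - (size u - i.+1) = i)%N.
  by move=> i; have := ltn_ord i; lia.
under [X in eqm _ X]eq_bigr do rewrite e.
under eq_bigr do rewrite -scalerAr -exprD.
apply: (@eqm_sum_pow (size u) (fun j => cf u`_j)
  (fun j => ((size u).-1 + m.-1 * j)%N) (fun j => (size u - j.+1)%N)) => j hj.
apply/eqP; rewrite -(eqn_modDr j) -addnA -mulSnr prednK // [(_ + m * j)%N]addnC mulnC modnMDl.
have -> : (size u - j.+1 + j = (size u).-1)%N by lia.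
by [].
Qed.
Lemma pr_cr p u : pr p -> (p %| conj_recip q u) = (p %| sig u).
Proof.
move=> hp; rewrite -(eqm_dvd _ _ _ (prX _ hp) (cr_sig u)).
apply/idP/idP; last exact: dvdp_mull.
by move=> /(prP _ hp) [h|//]; move: h; rewrite (negPf (pr_notX _ _ hp)).
Qed.

Lemma ct_sig (u : {poly F}) : (size u <= m.+1)%N -> eqm (conj_transp q m u) (sig u).
Proof.
move=> hu; rewrite /conj_transp poly_def (sig_expand _ _ hu).
rewrite (reindex_inj rev_ord_inj) /=.
have e : forall i : 'I_m.+1, (m - (m.+1 - i.+1) = i)%N.
  by move=> i; have := ltn_ord i; lia.
under eq_bigr do rewrite e.
apply: (@eqm_sum_pow m.+1 (fun j => cf u`_j)
  (fun j => (m.+1 - j.+1)%N) (fun j => (m.-1 * j)%N)) => j hj.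
apply/eqP; rewrite -(eqn_modDr j) -mulSnr prednK // mulnC modnMl.
have -> : (m.+1 - j.+1 + j = m)%N by lia.
by rewrite modnn.
Qed.

Definition ps p := gcdp X (sig p).

Lemma ps_dvd p u : pr p -> (ps p %| u) = (p %| sig u).
Proof.
move=> hp; apply/idP/idP.
  have [[s t] /= e] := Bezoutp X (sig p).
  rewrite /ps -(eqp_dvdl _ e) => /dvdpP [k ->].
  rewrite !sigM sigD !sigM; apply: dvdp_mull; apply: dvdp_add.
    by apply: dvdp_mull; apply: dvdp_trans (prX _ hp) sigX.
  by apply: dvdp_mull; rewrite (eqm_dvd _ _ _ (prX _ hp) (sigK p)) dvdpp.
move=> /dvdpP [w hw].
have h : eqm u (sig w * sig p) by rewrite -sigM -hw; apply: eqm_sym; apply: sigK.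
have -> : u = (u - sig w * sig p) + sig w * sig p by rewrite subrK.
apply: dvdp_add; first exact: dvdp_trans (dvdp_gcdl _ _) h.
by apply: dvdp_mull; apply: dvdp_gcdr.
Qed.

Lemma ps_sig p u : pr p -> (ps p %| sig u) = (p %| u).
Proof. by move=> hp; rewrite ps_dvd // (eqm_dvd _ _ _ (prX _ hp) (sigK u)). Qed.

Lemma ps_pr p : pr p -> pr (ps p).
Proof.
move=> hp; split; first exact: dvdp_gcdl.
  have : ps p != 0 by rewrite /ps gcdp_eq0 negb_and X_neq0.
  rewrite -size_poly_eq0; case e: (size (ps p)) => [|[|n]] // _.
  have : ps p %| 1 by rewrite dvdp1 e.
  by rewrite ps_dvd // sig1 (negPf (pr_not1 _ hp)).
move=> u v; rewrite !ps_dvd // sigM; exact: prP.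
Qed.

Lemma cr_neq0 (f : {poly F}) : f != 0 -> conj_recip q f != 0.
Proof.
move=> f0; apply/eqP => /(congr1 (fun z : {poly F} => z`_0)).
rewrite coef_poly lt0n size_poly_eq0 f0 subn0 coef0 => /eqP.
by rewrite -/(cf _) cf_eq0 -lead_coefE lead_coef_eq0 (negPf f0).
Qed.

Lemma scr_loc f : f %| X ->
  (scr q f <-> forall p, pr p -> (p %| f) = (p %| sig f)).
Proof.
move=> hf; have f0 : f != 0 by apply: contraTneq hf => ->; rewrite dvd0p X_neq0.
split.
  case=> a ha p hp; rewrite -pr_cr // ha.
  have a0 : a != 0 by apply: contraNneq (cr_neq0 _ f0) => a0; rewrite ha a0 scale0r.
  by rewrite dvdpZr.
move=> h; have hd : f %| conj_recip q f.
  by apply: dvd_loc => // p hp; rewrite pr_cr // -h.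
have hs : size f == size (conj_recip q f).
  rewrite eqn_leq dvdp_leq ?cr_neq0 //=; exact: size_poly.
rewrite (dvdp_size_eqp hd) in hs.
case/eqpP: hs => [[c1 c2] /andP [c10 c20] /= e].
exists (c1 / c2); rewrite mulrC -scalerA e scalerA mulVf // scale1r.
by [].
Qed.
Lemma pr_mul p u v : pr p -> (p %| u * v) = (p %| u) || (p %| v).
Proof.
move=> hp; apply/idP/orP; first exact: prP.
by case=> h; [apply: dvdp_mulr | apply: dvdp_mull].
Qed.

Hypothesis h11 : g11 %| X.
Hypothesis h22 : g22 %| X.
Hypothesis hdiv : g11 * g22 %| X * g12.

Lemma hdiv_loc p : pr p -> p %| g11 -> p %| g22 -> p %| g12.
Proof.
move=> hp /dvdpP [a ea] /dvdpP [b eb].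
set e := X %/ p; have hX : X = e * p by rewrite /e divpK // prX.
have p0 : p != 0 by rewrite -size_poly_eq0; move: (prS _ hp); case: (size p).
move: hdiv; rewrite ea eb hX.
have -> : a * p * (b * p) = (a * b * p) * p by ring.
have -> : e * p * g12 = (e * g12) * p by ring.
rewrite dvdp_mul2r // => h; have : p %| e * g12 by apply: dvdp_trans h; apply: dvdp_mull.
rewrite pr_mul // => /orP [he|//].
have hpe : p * e %| X by rewrite hX mulrC dvdpp.
by case: (sq_contra _ _ _ hp hpe (dvdpp p) he).
Qed.

Definition Loc p := forall a b, p %| H1 a b -> p %| H2 a b ->
  p %| a * g11 /\ p %| a * g12 + b * g22.

Lemma loc_of_LCD :
  (forall a b, X %| H1 a b -> X %| H2 a b -> X %| a * g11 /\ X %| a * g12 + b * g22)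
  <-> (forall p, pr p -> Loc p).
Proof.
split; last first.
  move=> h a b h1 h2; split; apply: dvdX_all => p hp.
    by case: (h p hp a b (dvdp_trans (prX _ hp) h1) (dvdp_trans (prX _ hp) h2)).
  by case: (h p hp a b (dvdp_trans (prX _ hp) h1) (dvdp_trans (prX _ hp) h2)).
move=> h p hp a b h1 h2.
set e := X %/ p; have hX : X = e * p by rewrite /e divpK // prX.
have he : ~~ (p %| e).
  apply/negP => he.
  have hpe : p * e %| X by rewrite hX mulrC dvdpp.
  by case: (sq_contra _ _ _ hp hpe (dvdpp p) he).
have hloc : forall u, p %| u -> X %| e * u.
  move=> u hu; apply: dvdX_all => p' hp'.
  have := prX _ hp'; rewrite hX pr_mul // => /orP [h'|h'].
    exact: dvdp_mulr.
  by apply: dvdp_mull; apply: dvdp_trans h' hu.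
have e1 : H1 (e * a) (e * b) = e * H1 a b by rewrite /H1; ring.
have e2 : H2 (e * a) (e * b) = e * H2 a b by rewrite /H2; ring.
have k12 := h (e * a) (e * b); rewrite e1 e2 in k12.
have [k1 k2] := k12 (hloc _ h1) (hloc _ h2).
have k1' : p %| e * (a * g11) by rewrite mulrA; apply: dvdp_trans (prX _ hp) k1.
have k2' : p %| e * (a * g12 + b * g22).
  have -> : e * (a * g12 + b * g22) = e * a * g12 + e * b * g22 by ring.
  exact: dvdp_trans (prX _ hp) k2.
rewrite pr_mul // (negPf he) /= in k1'.
by rewrite pr_mul // (negPf he) /= in k2'.
Qed.
Definition W := g11 * sig g11 + g12 * sig g12.

Definition LB (A B C A' B' C' w : bool) :=
  [&& (~~ A && ~~ B) ==> (~~ A' && ~~ B'), (A && ~~ B) ==> ~~ (C' && B')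
    & (~~ A && B) ==> (w ==> (~~ C && ~~ B'))].

Lemma hdiv_sig p : pr p -> p %| sig g11 -> p %| sig g22 -> p %| sig g12.
Proof. by move=> hp; rewrite -!ps_dvd //; apply: hdiv_loc; apply: ps_pr. Qed.

Lemma loc_iff p : pr p -> Loc p <->
  LB (p %| g11) (p %| g22) (p %| g12) (p %| sig g11) (p %| sig g22) (p %| sig g12) (p %| W).
Proof.
move=> hp; split.
  move=> hL; apply/and3P; split; apply/implyP.
  - case/andP => nA nB; case hA': (p %| sig g11); case hB': (p %| sig g22) => //=.
    + have [] := hL 1 0.
      * have -> : H1 1 0 = g11 * sig g11 + g12 * sig g12 by rewrite /H1; ring.
        by apply: dvdp_add; apply: dvdp_mull => //; apply: hdiv_sig.
      * have -> : H2 1 0 = g12 * sig g22 by rewrite /H2; ring.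
        exact: dvdp_mull.
      by rewrite mul1r (negPf nA).
    + have [] := hL g22 (- g12).
      * have -> : H1 g22 (- g12) = g22 * g11 * sig g11 by rewrite /H1; ring.
        exact: dvdp_mull.
      * have -> : H2 g22 (- g12) = 0 by rewrite /H2; ring.
        exact: dvdp0.
      by rewrite pr_mul // (negPf nA) (negPf nB).
    + have [] := hL (- (g22 * sig g12)) W.
      * have -> : H1 (- (g22 * sig g12)) W = 0 by rewrite /H1 /W; ring.
        exact: dvdp0.
      * have -> : H2 (- (g22 * sig g12)) W = g22 * g11 * sig g11 * sig g22.
          by rewrite /H2 /W; ring.
        exact: dvdp_mull.
      move=> _; have -> : - (g22 * sig g12) * g12 + W * g22 = g22 * g11 * sig g11.
        by rewrite /W; ring.
      by rewrite !pr_mul // (negPf nA) (negPf nB) hA'.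
  - case/andP => hA nB; apply/negP => /andP [hC' hB'].
    have [] := hL 0 1.
    * have -> : H1 0 1 = g22 * sig g12 by rewrite /H1; ring.
      exact: dvdp_mull.
    * have -> : H2 0 1 = g22 * sig g22 by rewrite /H2; ring.
      exact: dvdp_mull.
    by move=> _; rewrite mul0r add0r mul1r (negPf nB).
  - case/andP => nA hB; apply/implyP => hw; rewrite -negb_or; apply/negP => hCB.
    have [] := hL 1 0.
    * by have -> : H1 1 0 = W by rewrite /H1 /W; ring.
    * have -> : H2 1 0 = g12 * sig g22 by rewrite /H2; ring.
      by rewrite pr_mul // orbC; case/orP: hCB => ->; rewrite ?orbT.
    by rewrite mul1r (negPf nA).
move=> hL a b h1 h2.
have h2' : (p %| a * g12 + b * g22) || (p %| sig g22) by rewrite -pr_mul.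
case/and3P: hL => L1 L2 L3.
case hA : (p %| g11); case hB : (p %| g22).
- split; first exact: dvdp_mull.
  by apply: dvdp_add; apply: dvdp_mull => //; apply: hdiv_loc.
- split; first exact: dvdp_mull.
  rewrite hA hB /= in L2.
  move: h1; rewrite /H1 dvdp_addr; last by apply: dvdp_mulr; apply: dvdp_mull.
  rewrite pr_mul // => /orP [//|hC'].
  move: h2'; case: (p %| a * g12 + b * g22) => //= hB'.
  by rewrite hC' hB' in L2.
- rewrite hA hB /= in L3.
  have hW : p %| a * W.
    have -> : a * W = H1 a b - b * g22 * sig g12 by rewrite /H1 /W; ring.
    by apply: dvdp_sub => //; apply: dvdp_mulr; apply: dvdp_mull.
  have hG : p %| a * (g12 * sig g22).
    have -> : a * (g12 * sig g22) = H2 a b - b * g22 * sig g22 by rewrite /H2; ring.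
    by apply: dvdp_sub => //; apply: dvdp_mulr; apply: dvdp_mull.
  case ha : (p %| a).
    by split; [apply: dvdp_mulr | apply: dvdp_add; [apply: dvdp_mulr|apply: dvdp_mull]].
  rewrite pr_mul // ha /= in hW; rewrite !pr_mul // ha /= in hG.
  by move: L3; rewrite hW /=; case/orP: hG => ->; rewrite ?andbF.
- rewrite hA hB /= in L1; case/andP: L1 => nA' nB'.
  have hc : p %| a * g12 + b * g22 by move: h2'; rewrite (negPf nB') orbF.
  split => //.
  move: h1; rewrite /H1 dvdp_addl; last by apply: dvdp_mulr.
  by rewrite pr_mul // (negPf nA') orbF.
Qed.
Definition RB (A B C A' B' C' w : bool) :=
  [&& (A && B) == (A' && B'), (~~ A && ~~ B) == (~~ A' && ~~ B'),
      (B && ~~ A && ~~ (B' && ~~ A')) ==> ~~ C & (B && ~~ A && B' && ~~ A') ==> ~~ w].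
Lemma bool_comb A B C A' B' C' w : (A && B ==> C) -> (A' && B' ==> C') ->
  ((A || A') && (C || C') ==> w) ->
  (LB A B C A' B' C' w && LB A' B' C' A B C w) = (RB A B C A' B' C' w && RB A' B' C' A B C w).
Proof. by case: A; case: B; case: C; case: A'; case: B'; case: C'; case: w. Qed.

Definition vals (P : {poly F} -> bool) :=
  (P g11, P g22, P g12).

Lemma w_lemma p : pr p -> (p %| g11) || (p %| sig g11) -> (p %| g12) || (p %| sig g12) ->
  p %| W.
Proof.
move=> hp hA hC; rewrite /W.
case/orP: hA => hA; case/orP: hC => hC; apply: dvdp_add;
  by [apply: dvdp_mulr | apply: dvdp_mull].
Qed.

Lemma sigW : eqm (sig W) W.
Proof.
rewrite /W sigD !sigM.
apply: (eqm_trans _ (sig g11 * g11 + sig g12 * g12)).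
  by apply: eqmD; apply: eqmM; rewrite ?sigK //; apply: eqm_refl.
by apply: eqm_eq; ring.
Qed.

Definition RBp p := RB (p %| g11) (p %| g22) (p %| g12) (p %| sig g11) (p %| sig g22)
  (p %| sig g12) (p %| W).
Definition LBp p := LB (p %| g11) (p %| g22) (p %| g12) (p %| sig g11) (p %| sig g22)
  (p %| sig g12) (p %| W).

Lemma LBRB p : pr p -> LBp p && LBp (ps p) = RBp p && RBp (ps p).
Proof.
move=> hp; have hp' := ps_pr _ hp.
have e1 : forall u, (ps p %| u) = (p %| sig u) by move=> u; rewrite ps_dvd.
have e2 : forall u, (ps p %| sig u) = (p %| u) by move=> u; rewrite ps_sig.
have e3 : (ps p %| W) = (p %| W) by rewrite e1 (eqm_dvd _ _ _ (prX _ hp) sigW).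
rewrite /LBp /RBp e3 !e2 !e1; apply: bool_comb.
- by apply/implyP => /andP [h1 h2]; apply: hdiv_loc.
- by apply/implyP => /andP [h1 h2]; apply: hdiv_sig.
- by apply/implyP => /andP [h1 h2]; apply: w_lemma.
Qed.

Lemma LB_RB : (forall p, pr p -> LBp p) <-> (forall p, pr p -> RBp p).
Proof.
split => h p hp.
  by have := LBRB _ hp; rewrite (h _ hp) (h _ (ps_pr _ hp)) /= => /esym /andP [].
by have := LBRB _ hp; rewrite (h _ hp) (h _ (ps_pr _ hp)) /= => /andP [].
Qed.
Hypothesis h12 : (size g12 < size g22)%N.

Definition gg := gcdp g11 g22.
Definition g22p := g22 %/ gg.
Definition r22 := gcdp g22p (conj_recip q g22p).
Definition t22 := g22p %/ r22.
Definition ll := X %/ lcm_poly g11 g22.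

Lemma gg_X : gg %| X. Proof. exact: dvdp_trans (dvdp_gcdl _ _) h11. Qed.
Lemma g22p_X : g22p %| X. Proof. exact: dvdp_trans (divp_dvd (dvdp_gcdr _ _)) h22. Qed.
Lemma r22_X : r22 %| X. Proof. exact: dvdp_trans (dvdp_gcdl _ _) g22p_X. Qed.
Lemma t22_X : t22 %| X. Proof. exact: dvdp_trans (divp_dvd (dvdp_gcdl _ _)) g22p_X. Qed.

Lemma pgg p : (p %| gg) = (p %| g11) && (p %| g22). Proof. exact: dvdp_gcd. Qed.
Lemma pg22p p : pr p -> (p %| g22p) = (p %| g22) && ~~ (p %| g11).
Proof.
move=> hp; rewrite /g22p dvd_quo // ?dvdp_gcdr // pgg.
by case: (p %| g22); case: (p %| g11).
Qed.
Lemma pr22 p : pr p -> (p %| r22) = (p %| g22p) && (ps p %| g22p).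
Proof. by move=> hp; rewrite /r22 dvdp_gcd pr_cr // ps_dvd. Qed.
Lemma pt22 p : pr p -> (p %| t22) = (p %| g22p) && ~~ (p %| r22).
Proof. by move=> hp; rewrite /t22 dvd_quo // ?dvdp_gcdl // g22p_X. Qed.

Lemma lcm_eq : lcm_poly g11 g22 = g11 * g22p.
Proof. by rewrite /lcm_poly /g22p divp_mulA // dvdp_gcdr. Qed.

Lemma gg0 : gg != 0.
Proof.
rewrite /gg gcdp_eq0 negb_and; apply/orP; left.
by apply: contraTneq h11 => ->; rewrite dvd0p X_neq0.
Qed.

Lemma lcm_X : lcm_poly g11 g22 %| X.
Proof.
rewrite lcm_eq; set h := X %/ g11; have hX : X = g11 * h by rewrite /h divpKC.
rewrite {1}hX dvdp_mul2l; last by apply: contraTneq h11 => ->; rewrite dvd0p X_neq0.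
have cop : coprimep g22p (g11 %/ gg).
  rewrite coprimep_sym /g22p /gg; apply: coprimep_div_gcd.
  by apply/orP; left; apply: contraTneq h11 => ->; rewrite dvd0p X_neq0.
rewrite -(Gauss_dvdpr _ cop) -(dvdp_mul2r _ _ gg0).
have -> : g11 %/ gg * h * gg = g11 %/ gg * gg * h by ring.
by rewrite /g22p !divpK ?dvdp_gcdr ?dvdp_gcdl // -hX.
Qed.

Lemma ll_X : ll %| X. Proof. exact: divp_dvd lcm_X. Qed.
Lemma pll p : pr p -> (p %| ll) = ~~ (p %| g11) && ~~ (p %| g22).
Proof.
move=> hp; rewrite /ll dvd_quo // ?lcm_X ?prX // lcm_eq pr_mul // pg22p //.
by case: (p %| g22); case: (p %| g11).
Qed.

Lemma I_iff : scr q gg <-> forall p, pr p ->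
  (p %| g11) && (p %| g22) == (p %| sig g11) && (p %| sig g22).
Proof.
rewrite scr_loc ?gg_X //; split => h p hp.
  by rewrite -pgg h // -ps_dvd // pgg !ps_dvd.
by rewrite -ps_dvd // !pgg !ps_dvd //; apply/eqP; apply: h.
Qed.

Lemma II_iff : scr q ll <-> forall p, pr p ->
  (~~ (p %| g11) && ~~ (p %| g22)) == (~~ (p %| sig g11) && ~~ (p %| sig g22)).
Proof.
rewrite scr_loc ?ll_X //; split => h p hp.
  by rewrite -pll // h // -(ps_dvd _ ll hp) (pll _ (ps_pr _ hp)) !ps_dvd.
by rewrite -(ps_dvd _ ll hp) (pll _ hp) (pll _ (ps_pr _ hp)) !ps_dvd //; apply/eqP; apply: h.
Qed.

Lemma III_iff : coprimep t22 g12 <-> forall p, pr p ->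
  ((p %| g22) && ~~ (p %| g11) && ~~ ((p %| sig g22) && ~~ (p %| sig g11))) ==> ~~ (p %| g12).
Proof.
rewrite cop_loc ?t22_X //; split => h p hp.
  apply/implyP => hh; apply: h => //; rewrite pt22 // pr22 // pg22p // (pg22p _ (ps_pr _ hp)) !ps_dvd //.
  by move: hh; case: (p %| g22); case: (p %| g11); case: (p %| sig g22); case: (p %| sig g11).
move=> ht; apply: (implyP (h p hp)); move: ht.
rewrite pt22 // pr22 // pg22p // (pg22p _ (ps_pr _ hp)) !ps_dvd //.
by case: (p %| g22); case: (p %| g11); case: (p %| sig g22); case: (p %| sig g11).
Qed.

Lemma W_eqm : eqm (g11 * conj_transp q m g11 + g12 * conj_transp q m g12) W.
Proof.
have s22 : (size g22 <= m.+1)%N by rewrite -size_X dvdp_leq // X_neq0.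
apply: eqmD; apply: eqmM; try exact: eqm_refl; apply: ct_sig.
  by rewrite -size_X dvdp_leq // X_neq0.
exact: leq_trans (ltnW h12) s22.
Qed.

Lemma IV_iff : coprimep r22 (g11 * conj_transp q m g11 + g12 * conj_transp q m g12) <->
  forall p, pr p ->
  ((p %| g22) && ~~ (p %| g11) && (p %| sig g22) && ~~ (p %| sig g11)) ==> ~~ (p %| W).
Proof.
rewrite cop_loc ?r22_X //; split => h p hp.
  apply/implyP => hh; rewrite -(eqm_dvd _ _ _ (prX _ hp) W_eqm); apply: h => //.
  rewrite pr22 // pg22p // (pg22p _ (ps_pr _ hp)) !ps_dvd //.
  by move: hh; case: (p %| g22); case: (p %| g11); case: (p %| sig g22); case: (p %| sig g11).
move=> ht; rewrite (eqm_dvd _ _ _ (prX _ hp) W_eqm); apply: (implyP (h p hp)); move: ht.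
rewrite pr22 // pg22p // (pg22p _ (ps_pr _ hp)) !ps_dvd //.
by case: (p %| g22); case: (p %| g11); case: (p %| sig g22); case: (p %| sig g11).
Qed.
Lemma main_sec : herm_LCD q m (qc_code m g11 g12 g22) <->
  [/\ scr q gg, scr q ll, coprimep t22 g12 &
      coprimep r22 (g11 * conj_transp q m g11 + g12 * conj_transp q m g12)].
Proof.
apply: (iff_trans LCD_iff); apply: (iff_trans loc_of_LCD).
apply: (iff_trans (_ : _ <-> forall p, pr p -> LBp p)).
  by split => h p hp; [apply/(loc_iff _ hp) | apply/(loc_iff _ hp)]; apply: h.
apply: (iff_trans LB_RB); split.
  move=> h; split.
  - by apply/I_iff => p hp; case/and4P: (h p hp).
  - by apply/II_iff => p hp; case/and4P: (h p hp).
  - by apply/III_iff => p hp; case/and4P: (h p hp).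
  - by apply/IV_iff => p hp; case/and4P: (h p hp).
case=> hI hII hIII hIV p hp; apply/and4P; split.
- exact: (proj1 I_iff hI p hp).
- exact: (proj1 II_iff hII p hp).
- exact: (proj1 III_iff hIII p hp).
- exact: (proj1 IV_iff hIV p hp).
Qed.
End S.

Theorem theorem6p3 (F : finFieldType) (q m : nat)
  (hq : exists p k : nat, [/\ prime p, (0 < k)%N & q = (p ^ k)%N])
  (hF : #|F| = (q ^ 2)%N)
  (hm : (1 <= m)%N) (hqm : coprime q m)
  (g11 g12 g22 : {poly F})
  (h11 : g11 %| xm1 F m) (h22 : g22 %| xm1 F m)
  (h12 : (size g12 < size g22)%N)
  (hdiv : g11 * g22 %| xm1 F m * g12) :
  let g := gcdp g11 g22 in
  let l := xm1 F m %/ lcm_poly g11 g22 in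
  let g11' := g11 %/ g in
  let g22' := g22 %/ g in
  let r22 := gcdp g22' (conj_recip q g22') in
  let t22 := g22' %/ r22 in
  herm_LCD q m (qc_code m g11 g12 g22) <->
  [/\ scr q g, scr q l, coprimep t22 g12 &
      coprimep r22 (g11 * conj_transp q m g11 + g12 * conj_transp q m g12)].
Proof.
case: hq => p [k [pp k0 eq]].
have pc : p \in [pchar F].
  by apply: (card_finPcharP (n := (k * 2)%N)) => //; rewrite hF eq expnM.
have q0 : (0 < q)%N by rewrite eq expn_gt0 prime_gt0.
have conjD : forall a b : F, (a + b) ^+ q = a ^+ q + b ^+ q.
  move=> a b; apply: exprDn_pchar.
  by rewrite eq pnatX (pnatE _ pp) pc.
have conjK : forall a : F, (a ^+ q) ^+ q = a.
  by move=> a; rewrite -exprM -[(q * q)%N]/(q ^ 2)%N -hF expf_card.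
have mF : (m%:R : F) != 0.
  rewrite -(dvdn_pcharf pc); apply/negP => hpm.
  have : coprime p m by apply: coprime_dvdl hqm; rewrite eq dvdn_exp.
  by rewrite /coprime (eqP (_ : gcdn p m == p)) ?prime_gt1 ?(negPf _) //;
    [case: (p) pp => [|[]] | apply/eqP; apply/gcdn_idPl].
move=> g l g11' g22' r22 t22.
exact: (@main_sec F q m conjD q0 conjK hm mF g11 g12 g22 h11 h22 hdiv h12).
Qed.
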